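(* Let the system $x^+=f(x,u)$, $\zeta=g(x,u)$ be flat with flat output $y=\varphi(\zeta_{[-Q_1,-1]},x,u,u_{[1,Q_2]})$, and let $z^+=\psi_x(z,v)$, $\eta=\psi_u(z,v)$ be its associated system. Then: (i) The associated system is backward-flat with backward-flat output $\hat y=\varphi(\psi_x(z,v),\psi_u(z,v),\eta_{[-1,-Q_2]})=\hat\varphi(\eta_{[-Q_2,-1]},z,v)$ if and only if the original system is forward-flat with forward-flat output $y=\varphi(x,u,u_{[1,Q_2]})$. (ii) The associated system is forward-flat with forward-flat output $\hat y=\varphi(v_{[Q_1,1]},\psi_x(z,v),\psi_u(z,v))=\hat\varphi(z,v,v_{[1,Q_1]})$ if and only if the original system is backward-flat with backward-flat output $y=\varphi(\zeta_{[-Q_1,-1]},x,u)$. (In these formulas, $\zeta_{[-j]}$ is replaced by $v_{[j]}$ and $u_{[j]}$ by $\eta_{[-j]}$, componentwise.)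
   Context: Consider a nonlinear time-invariant discrete-time system $x^{i,+}=f^i(x,u)$, $i=1,\dots,n$, with $x\in\mathbb{R}^n$, $u\in\mathbb{R}^m$, smooth $f$, $\operatorname{rank}(\partial_u f)=m$, and $\operatorname{rank}(\partial_{(x,u)}f)=n$. Choose $m$ smooth functions $g(x,u)$ such that $(x,u)\mapsto(f(x,u),g(x,u))$ is a local diffeomorphism, with local inverse $x=\psi_x(x^+,\zeta)$, $u=\psi_u(x^+,\zeta)$. The associated system is $z^+=\psi_x(z,v)$, $\eta=\psi_u(z,v)$, $z\in\mathbb{R}^n$, $v,\eta\in\mathbb{R}^m$. Notation: $w_{[\alpha]}$ is the $\alpha$-th forward shift, $w_{[-\alpha]}$ the $\alpha$-th backward shift; for multi-indices, $y_{[-S_1,S_2]}$ denotes all $y^j_{[i]}$ with $-s_{1,j}\le i\le s_{2,j}$. Flatness: the system is flat around an equilibrium if there exist an $m$-tuple $y=\varphi(\zeta_{[-Q_1,-1]},x,u,u_{[1,Q_2]})$ (flat output, with $\zeta=g(x,u)$) and maps $x=F_x(y_{[-R_1,R_2-1]})$, $u=F_u(y_{[-R_1,R_2]})$ establishing locally a one-to-one correspondence between system trajectories and arbitrary sequences $y(k)\in\mathbb{R}^m$. Forward-flat: flat with a flat output $y=\varphi(x,u,u_{[1,Q_2]})$ (no backward shifts) and $R_1=(0,\dots,0)$, i.e. $x=F_x(y_{[0,R_2-1]})$, $u=F_u(y_{[0,R_2]})$. Backward-flat: flat with a flat output $y=\varphi(\zeta_{[-Q_1,-1]},x,u)$ (no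 forward shifts) and $R_2=(0,\dots,0)$, i.e. $x=F_x(y_{[-R_1,-1]})$, $u=F_u(y_{[-R_1,0]})$. The same definitions apply to the associated system with $(z,v,\eta,\psi_x,\psi_u)$ in place of $(x,u,\zeta,f,g)$. *)

(* Defs.v *)
From HB Require Import structures.
From mathcomp Require Import all_boot all_order all_algebra.
From mathcomp Require Import all_classical all_reals all_analysis.
Set Implicit Arguments. Unset Strict Implicit. Unset Printing Implicit Defensive.
Import Order.TTheory GRing.Theory Num.Theory.
Import numFieldNormedType.Exports.
Local Open Scope classical_set_scope.
Local Open Scope ring_scope.

Section Smooth.
Context {R : realType} {V W : normedModType R}.

Fixpoint Ck_on (k : nat) (A : set V) (h : V -> W) : Prop :=
  match k with
  | 0 => forall x, A x -> {for x, continuous h}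
  | k'.+1 => (forall x, A x -> forall v, derivable h x v) /\
             (forall v, Ck_on k' A (fun x => derive h x v))
  end.

Definition smooth_on (A : set V) (h : V -> W) : Prop :=
  open A /\ forall k, Ck_on k A h.

Definition smooth_near (h : V -> W) (p : V) : Prop :=
  exists A : set V, A p /\ smooth_on A h.

Definition smooth (h : V -> W) : Prop := smooth_on setT h.
End Smooth.

Section Systems.
Context {R : realType} {n m : nat}.

Local Notation St := 'rV[R]_n.
Local Notation In := 'rV[R]_m.

Definition uncurry_sys {C : Type} (h : St -> In -> C) : St * In -> C :=
  fun p => h p.1 p.2.

Definition jac_x (f : St -> In -> St) (p : St * In) : 'M[R]_(n, n) :=
  \matrix_(i < n, j < n) (derive (uncurry_sys f) p (delta_mx 0 j, 0)) 0 i.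
Definition jac_u (f : St -> In -> St) (p : St * In) : 'M[R]_(n, m) :=
  \matrix_(i < n, j < m) (derive (uncurry_sys f) p (0, delta_mx 0 j)) 0 i.

Definition traj (f : St -> In -> St) (x : int -> St) (u : int -> In) : Prop :=
  forall k : int, x (k + 1) = f (x k) (u k).

Definition win (s : int -> In) (a : int) (L : nat) : 'M[R]_(L, m) :=
  \matrix_(i < L, j < m) s (a + (i : nat)%:Z) 0 j.

Definition cwin (L : nat) (c : In) : 'M[R]_(L, m) :=
  \matrix_(i < L, j < m) c 0 j.

Definition rev_win (L : nat) (M : 'M[R]_(L, m)) : 'M[R]_(L, m) :=
  \matrix_(i < L, j < m) M (rev_ord i) j.

(* Candidate flat output of the general form
     y = phi(zeta_[-Q1,-1], x, u, u_[1,Q2])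
   where the first argument is the window zeta(k-Q1),...,zeta(k-1) and the
   last one is the window u(k+1),...,u(k+Q2).
   flat_output_R f g x0 u0 Q1 Q2 phi R1 R2 states that phi is a flat output
   around the equilibrium (x0,u0) with parametrisation maps
     x = Fx(y_[-R1,R2-1]),  u = Fu(y_[-R1,R2]),
   i.e. both maps are smooth near the equilibrium and they establish locally
   (trajectories staying near the equilibrium / output sequences staying near
   the equilibrium value of y) a one-to-one correspondence between system
   trajectories and arbitrary sequences y(k) in R^m. *)
Definition flat_output_R (f : St -> In -> St) (g : St -> In -> In)
    (x0 : St) (u0 : In) (Q1 Q2 : nat)
    (phi : 'M[R]_(Q1, m) -> St -> In -> 'M[R]_(Q2, m) -> In)
    (R1 R2 : nat) : Prop :=
  let zeta0 := g x0 u0 in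
  let y0 := phi (cwin Q1 zeta0) x0 u0 (cwin Q2 u0) in
  exists (Fx : 'M[R]_(R1 + R2, m) -> St) (Fu : 'M[R]_((R1 + R2).+1, m) -> In),
    smooth_near (fun w : 'M[R]_(Q1, m) * (St * (In * 'M[R]_(Q2, m))) =>
                   phi w.1 w.2.1 w.2.2.1 w.2.2.2)
                (cwin Q1 zeta0, (x0, (u0, cwin Q2 u0))) /\
    smooth_near Fx (cwin (R1 + R2) y0) /\
    smooth_near Fu (cwin (R1 + R2).+1 y0) /\
    exists (U : set (St * In)) (Y : set In),
      nbhs (x0, u0) U /\ nbhs y0 Y /\
      (forall (x : int -> St) (u : int -> In),
         traj f x u -> (forall k, U (x k, u k)) ->
         let zeta := fun k => g (x k) (u k) in
         let y := fun k => phi (win zeta (k - Q1%:Z) Q1) (x k) (u k)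
                               (win u (k + 1) Q2) in
         forall k, x k = Fx (win y (k - R1%:Z) (R1 + R2)) /\
                   u k = Fu (win y (k - R1%:Z) (R1 + R2).+1)) /\
      (forall y : int -> In, (forall k, Y (y k)) ->
         let x := fun k => Fx (win y (k - R1%:Z) (R1 + R2)) in
         let u := fun k => Fu (win y (k - R1%:Z) (R1 + R2).+1) in
         let zeta := fun k => g (x k) (u k) in
         traj f x u /\
         forall k, y k = phi (win zeta (k - Q1%:Z) Q1) (x k) (u k)
                             (win u (k + 1) Q2)).

Definition is_flat_output f g x0 u0 Q1 Q2 phi : Prop :=
  exists R1 R2, @flat_output_R f g x0 u0 Q1 Q2 phi R1 R2.

Definition forward_flat_output f g x0 u0 (Q2 : nat)
    (phi : St -> In -> 'M[R]_(Q2, m) -> In) : Prop :=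
  exists R2, @flat_output_R f g x0 u0 0 Q2 (fun _ => phi) 0 R2.

Definition backward_flat_output f g x0 u0 (Q1 : nat)
    (phi : 'M[R]_(Q1, m) -> St -> In -> In) : Prop :=
  exists R1, @flat_output_R f g x0 u0 Q1 0 (fun a x u _ => phi a x u) R1 0.

Definition local_inverse (f : St -> In -> St) (g : St -> In -> In)
    (psix : St -> In -> St) (psiu : St -> In -> In) (x0 : St) (u0 : In) :=
  exists (A : set (St * In)) (B : set (St * In)),
    A (x0, u0) /\ B (f x0 u0, g x0 u0) /\
    smooth_on A (fun p => (f p.1 p.2, g p.1 p.2)) /\
    smooth_on B (fun q => (psix q.1 q.2, psiu q.1 q.2)) /\
    (forall p, A p -> B (f p.1 p.2, g p.1 p.2) /\
       psix (f p.1 p.2) (g p.1 p.2) = p.1 /\ psiu (f p.1 p.2) (g p.1 p.2) = p.2) /\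
    (forall q, B q -> A (psix q.1 q.2, psiu q.1 q.2) /\
       f (psix q.1 q.2) (psiu q.1 q.2) = q.1 /\ g (psix q.1 q.2) (psiu q.1 q.2) = q.2).
End Systems.

Arguments flat_output_R {R n m} f g x0 u0 Q1 Q2 phi R1 R2.
Arguments is_flat_output {R n m} f g x0 u0 Q1 Q2 phi.
Arguments forward_flat_output {R n m} f g x0 u0 Q2 phi.
Arguments backward_flat_output {R n m} f g x0 u0 Q1 phi.
Arguments local_inverse {R n m} f g psix psiu x0 u0.
Arguments win {R m} s a L.
Arguments cwin {R m} L c.
Arguments rev_win {R m L} M.

(* Main.v *)
Require Import Defs.
From HB Require Import structures.
From mathcomp Require Import all_boot all_order all_algebra.
From mathcomp Require Import all_classical all_reals all_analysis.
From mathcomp Require Import zify.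
Import Order.TTheory GRing.Theory Num.Theory.
Import numFieldNormedType.Exports.
Local Open Scope classical_set_scope.
Local Open Scope ring_scope.
Set Implicit Arguments. Unset Strict Implicit. Unset Printing Implicit Defensive.

Section PartA.
Context {R : realType}.

Definition lcont {V W : normedModType R} (L : V -> W) :=
  continuous L /\ (forall a b, L (a + b) = L a + L b) /\
  (forall (r : R) a, L (r *: a) = r *: L a).

Lemma lcontB {V W : normedModType R} (L : V -> W) : lcont L ->
  forall a b, L (a - b) = L a - L b.
Proof.
move=> [_ [LD LZ]] a b; rewrite LD -scaleN1r LZ scaleN1r //.
Qed.

Lemma lcont0 {V W : normedModType R} (L : V -> W) : lcont L -> L 0 = 0.
Proof. by move=> hL; rewrite -(subrr 0) (lcontB hL) subrr. Qed.

Lemma lin_der {V W W' : normedModType R} (L : W -> W') (h : V -> W) x v :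
  lcont L -> derivable h x v ->
  derivable (L \o h) x v /\ derive (L \o h) x v = L (derive h x v).
Proof.
move=> hL dh.
have [Lc [LD LZ]] := hL.
have eq : (fun t : R => t^-1 *: (((L \o h) \o shift x) (t *: v) - (L \o h) x)) =
  L \o (fun t : R => t^-1 *: ((h \o shift x) (t *: v) - h x)).
  by apply/funext => t /=; rewrite LZ (lcontB hL).
have cv : (L \o (fun t : R => t^-1 *: ((h \o shift x) (t *: v) - h x))) @ 0^'
     --> L (derive h x v).
  apply: continuous_cvg; first exact: Lc.
  exact: dh.
split.
  by rewrite /derivable eq; apply/cvg_ex; eexists; exact: cv.
by rewrite /derive eq; apply: cvg_lim.
Qed.

Lemma pre_der {V V' W : normedModType R} (L : V' -> V) (h : V -> W) x v :
  lcont L ->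
  (derivable (h \o L) x v <-> derivable h (L x) (L v)) /\
  derive (h \o L) x v = derive h (L x) (L v).
Proof.
move=> hL; have [Lc [LD LZ]] := hL.
have eq : (fun t : R => t^-1 *: (((h \o L) \o shift x) (t *: v) - (h \o L) x)) =
   (fun t : R => t^-1 *: ((h \o shift (L x)) (t *: L v) - h (L x))).
  by apply/funext => t /=; rewrite LD LZ.
by rewrite /derivable /derive eq.
Qed.

Section CkV.
Context {V W : normedModType R}.

Lemma open_nbhs_of (A : set V) x : open A -> A x -> nbhs x A.
Proof. by move=> oA Ax; move: oA; rewrite openE => /(_ x Ax). Qed.

Lemma Ck_loc k (A : set V) (h1 h2 : V -> W) : open A ->
  (forall x, A x -> h1 x = h2 x) -> Ck_on k A h1 -> Ck_on k A h2.
Proof.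
move=> oA; elim: k h1 h2 => [|k IH] h1 h2 e /=.
  move=> c x Ax.
  have nA : {near x, h1 =1 h2}.
    by apply: filterS (open_nbhs_of oA Ax) => y Ay; exact: e.
  rewrite /prop_for /continuous_at -(e x Ax).
  exact: cvg_trans (near_eq_cvg nA) (c x Ax).
move=> [d c]; split.
  move=> x Ax v; apply: near_eq_derivable (d x Ax v).
  by apply: filterS (open_nbhs_of oA Ax) => y Ay; exact: e.
move=> v; apply: (IH (fun x => derive h1 x v)) (c v) => x Ax.
apply: near_eq_derive.
by apply: filterS (open_nbhs_of oA Ax) => y Ay; exact: e.
Qed.

Lemma Ck_sub k (A B : set V) (h : V -> W) : B `<=` A -> Ck_on k A h -> Ck_on k B h.
Proof.
move=> BA; elim: k h => [|k IH] h /=.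
  by move=> c x Bx; exact: c (BA _ Bx).
move=> [d c]; split; first by move=> x Bx; exact: d (BA _ Bx).
by move=> v; exact: IH.
Qed.

Lemma Ck_cst k (A : set V) (c : W) : open A -> Ck_on k A (fun _ => c).
Proof.
move=> oA; elim: k c => [|k IH] c /=.
  by move=> x _; exact: cvg_cst.
split; first by move=> x _ v; exact: derivable_cst.
move=> v; apply: (@Ck_loc _ _ (fun _ => 0)) => //.
by move=> x _; rewrite (derive_cst c x v).
Qed.

Lemma Ck_add k (A : set V) (f g : V -> W) : open A ->
  Ck_on k A f -> Ck_on k A g -> Ck_on k A (fun x => f x + g x).
Proof.
move=> oA; elim: k f g => [|k IH] f g /=.
  move=> cf cg x Ax; exact: cvgD (cf x Ax) (cg x Ax).
move=> [df cf] [dg cg]; split.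
  move=> x Ax v; exact: (derivableD (df x Ax v) (dg x Ax v)).
move=> v; apply: (@Ck_loc _ _ (fun x => derive f x v + derive g x v)) => //.
  move=> x Ax; rewrite -(deriveD (df x Ax v) (dg x Ax v)) //.
exact: IH.
Qed.

End CkV.

Lemma Ck_post {V W W' : normedModType R} k (A : set V) (h : V -> W) (L : W -> W') :
  open A -> lcont L -> Ck_on k A h -> Ck_on k A (L \o h).
Proof.
move=> oA hL; elim: k h => [|k IH] h /=.
  move=> c x Ax; apply: continuous_cvg; [exact: hL.1 | exact: c].
move=> [d c]; split.
  by move=> x Ax v; have [] := lin_der hL (d x Ax v).
move=> v; apply: (@Ck_loc _ _ _ _ (L \o (fun x => derive h x v))) => //.
  by move=> x Ax; have [_ ->] := lin_der hL (d x Ax v).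
exact: IH.
Qed.

Lemma Ck_pre {V V' W : normedModType R} k (A : set V) (h : V -> W) (L : V' -> V) :
  open A -> lcont L -> Ck_on k A h -> Ck_on k (L @^-1` A) (h \o L).
Proof.
move=> oA hL; have oLA : open (L @^-1` A).
  by apply: open_comp => // x _; exact: hL.1.
elim: k h => [|k IH] h /=.
  move=> c x Ax; apply: continuous_comp; [exact: hL.1 | exact: c].
move=> [d c]; split.
  by move=> x Ax v; have [[_ H] _] := pre_der h x v hL; apply: H; exact: d.
move=> v; apply: (@Ck_loc _ _ _ _ ((fun y => derive h y (L v)) \o L)) => //.
  by move=> x Ax; have [_ ->] := pre_der h x v hL.
exact: IH.
Qed.

End PartA.
Section PartA2.
Context {R : realType}.

Definition CkLe {V W : normedModType R} j (A : set V) (h : V -> W) :=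
  forall i, (i <= j)%N -> Ck_on i A h.

Definition SM {V W : normedModType R} (A : set V) (h : V -> W) :=
  forall k, Ck_on k A h.

Section S.
Context {V W : normedModType R}.
Implicit Types (A : set V).

Lemma Ck_sum k A N (F : 'I_N -> V -> W) : open A ->
  (forall i, Ck_on k A (F i)) -> Ck_on k A (fun x => \sum_(i < N) F i x).
Proof.
move=> oA; elim: N F => [|N IH] F hF.
  apply: (Ck_loc (h1 := fun _ => 0)) => //; last exact: Ck_cst.
  by move=> x _; rewrite big_ord0.
apply: (Ck_loc (h1 := fun x => \sum_(i < N) F (widen_ord (leqnSn N) i) x + F ord_max x)) => //.
  by move=> x _; rewrite big_ord_recr.
apply: Ck_add => //; first exact: (IH (fun i => F (widen_ord (leqnSn N) i))).
Qed.

Lemma CkLe_loc j A (h1 h2 : V -> W) : open A ->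
  (forall x, A x -> h1 x = h2 x) -> CkLe j A h1 -> CkLe j A h2.
Proof. by move=> oA e c i ij; apply: Ck_loc oA e (c i ij). Qed.

Lemma CkLe_add j A (f g : V -> W) : open A ->
  CkLe j A f -> CkLe j A g -> CkLe j A (fun x => f x + g x).
Proof. by move=> oA cf cg i ij; apply: Ck_add => //; [exact: cf|exact: cg]. Qed.

Lemma CkLe_sum j A N (F : 'I_N -> V -> W) : open A ->
  (forall i, CkLe j A (F i)) -> CkLe j A (fun x => \sum_(i < N) F i x).
Proof. by move=> oA hF i ij; apply: Ck_sum => // l; exact: hF. Qed.

Lemma CkLe_cst j A (c : W) : open A -> CkLe j A (fun _ => c).
Proof. by move=> oA i _; exact: Ck_cst. Qed.

Lemma CkLe_le j j' A (h : V -> W) : (j' <= j)%N -> CkLe j A h -> CkLe j' A h.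
Proof. by move=> jj c i ij; apply: c; exact: leq_trans ij jj. Qed.

Lemma SM_CkLe j A (h : V -> W) : SM A h -> CkLe j A h.
Proof. by move=> s i _; exact: s. Qed.

Lemma CkLe_der j A (h : V -> W) : CkLe j.+1 A h -> forall v, CkLe j A (fun x => derive h x v).
Proof. by move=> c v i ij; have [_ ] := c i.+1 ij; apply. Qed.

Lemma SM_der A (h : V -> W) : SM A h -> forall v, SM A (fun x => derive h x v).
Proof. by move=> c v i; have [_ ] := c i.+1; apply. Qed.

End S.

Lemma CkLe_post {V W W' : normedModType R} j (A : set V) (h : V -> W) (L : W -> W') :
  open A -> lcont L -> CkLe j A h -> CkLe j A (L \o h).
Proof. by move=> oA hL c i ij; apply: Ck_post => //; exact: c. Qed.

Lemma SM_post {V W W' : normedModType R} (A : set V) (h : V -> W) (L : W -> W') :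
  open A -> lcont L -> SM A h -> SM A (L \o h).
Proof. by move=> oA hL c i; apply: Ck_post => //; exact: c. Qed.

Lemma SM_pre {V V' W : normedModType R} (A : set V) (h : V -> W) (L : V' -> V) :
  open A -> lcont L -> SM A h -> SM (L @^-1` A) (h \o L).
Proof. by move=> oA hL c i; apply: Ck_pre => //; exact: c. Qed.

Lemma Ck_mul {V : normedModType R} j (A : set V) (f g : V -> R) : open A ->
  CkLe j A f -> CkLe j A g -> Ck_on j A (fun x => f x * g x).
Proof.
move=> oA; elim: j f g => [|j IH] f g cf cg /=.
  move=> x Ax; apply: cvgM; [exact: (cf 0%N isT x Ax)|exact: (cg 0%N isT x Ax)].
have [df _] := cf 1%N isT; have [dg _] := cg 1%N isT.
split.
  move=> x Ax v; exact: (derivableM (df x Ax v) (dg x Ax v)).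
move=> v.
apply: (Ck_loc (h1 := fun x => f x * derive g x v + g x * derive f x v)) => //.
  by move=> x Ax; rewrite (deriveM (df x Ax v) (dg x Ax v)).
apply: Ck_add => //; apply: IH.
- exact: CkLe_le cf.
- exact: CkLe_der.
- exact: CkLe_le cg.
- exact: CkLe_der.
Qed.

Lemma CkLe_mul {V : normedModType R} j (A : set V) (f g : V -> R) : open A ->
  CkLe j A f -> CkLe j A g -> CkLe j A (fun x => f x * g x).
Proof.
move=> oA cf cg i ij; apply: Ck_mul => //.
- exact: CkLe_le cf.
- exact: CkLe_le cg.
Qed.

Lemma lcont_scl {W : normedModType R} (w : W) : lcont (fun r : R => r *: w).
Proof.
split; first by move=> r; apply: continuousZr_tmp; exact: cvg_id.
by split => *; rewrite ?scalerDl ?scalerA.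
Qed.

Lemma lcont_coord (M : nat) (l : 'I_M) : lcont (fun w : 'rV[R]_M => w 0 l).
Proof.
split; first exact: coord_continuous.
by split => *; rewrite !mxE.
Qed.

Lemma CkLe_sclv {V : normedModType R} j (A : set V) M (c : V -> R) (G : V -> 'rV[R]_M) :
  open A -> CkLe j A c -> CkLe j A G -> CkLe j A (fun x => c x *: G x).
Proof.
move=> oA cc cG.
apply: (CkLe_loc (h1 := fun x => \sum_(l < M) (c x * G x 0 l) *: 'e_l)) => //.
  move=> x _; rewrite [RHS]row_sum_delta; apply: eq_bigr => l _; rewrite mxE //.
apply: CkLe_sum => // l.
apply: (@CkLe_post _ _ _ j A _ (fun r : R => r *: 'e_l)) => //; first exact: lcont_scl.
apply: CkLe_mul => //.
exact: (@CkLe_post _ _ _ j A G (fun w : 'rV[R]_M => w 0 l) oA (lcont_coord l)).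
Qed.

End PartA2.
Section PartB.
Context {R : realType}.

Lemma mx_norm_le a b (v : 'M[R]_(a, b)) (C : R) : 0 <= C ->
  (forall i j, `|v i j| <= C) -> `|v| <= C.
Proof.
move=> C0 hv; rewrite [X in X <= _]mx_normrE.
apply: bigmax_le => // ij _; exact: hv.
Qed.

Lemma mx_coord_le a b (v : 'M[R]_(a, b)) i j : `|v i j| <= `|v|.
Proof.
rewrite [X in _ <= X]mx_normrE.
exact: (le_bigmax _ (fun ij : 'I_a * 'I_b => `|v ij.1 ij.2|) (i, j)).
Qed.

End PartB.
Section PartB2.
Context {R : realType}.

Lemma line_der {V : normedModType R} (phi : V -> R) (p e : V) (t : R) :
  derivable phi (p + t *: e) e ->
  is_derive t 1 (fun s : R => phi (p + s *: e)) (derive phi (p + t *: e) e).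
Proof.
move=> d.
have eq : (fun s : R => s^-1 *: (((fun s => phi (p + s *: e)) \o shift t) (s *: 1)
              - phi (p + t *: e))) =
          (fun s : R => s^-1 *: ((phi \o shift (p + t *: e)) (s *: e) - phi (p + t *: e))).
  apply/funext => s /=; congr (_ *: (phi _ - _)).
  by rewrite [_%:A]mulr1 scalerDl addrCA.
split; first by rewrite /derivable eq.
by rewrite /derive eq.
Qed.

Lemma der_cont (g : R -> R) (t dg : R) : is_derive t (1 : R) g dg -> {for t, continuous g}.
Proof.
move=> [d _]; apply: differentiable_continuous; exact/derivable1_diffP.
Qed.

Lemma MVT_sym (g dg : R -> R) (b : R) :
  (forall t : R, `|t| <= `|b| -> is_derive t (1 : R) g (dg t)) ->
  exists c, `|c| <= `|b| /\ g b - g 0 = dg c * b.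
Proof.
move=> H.
case: (ltrgtP b 0) => hb.
- have [c cI E] : exists2 c, c \in `]b, 0[ & g 0 - g b = dg c * (0 - b).
    apply: MVT => //.
      move=> c; rewrite in_itv /= => /andP[h1 h2]; apply: H.
      by rewrite !ltr0_norm // lerN2 ltW.
    apply: continuous_in_subspaceT => c; rewrite inE /= in_itv /= => /andP[h1 h2].
    apply: der_cont; apply: H.
    rewrite (ltr0_norm hb); have [c0|c0] := leP 0 c.
      by rewrite ger0_norm // (le_trans h2) // oppr_ge0 ltW.
    by rewrite ltr0_norm // lerN2.
  exists c; move: cI; rewrite in_itv /= => /andP[h1 h2]; split.
    by rewrite !ltr0_norm // lerN2 ltW.
  by apply: (can_inj (@opprK _)); rewrite opprB E sub0r mulrN.
- have [c cI E] : exists2 c, c \in `]0, b[ & g b - g 0 = dg c * (b - 0).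
    apply: MVT => //.
      move=> c; rewrite in_itv /= => /andP[h1 h2]; apply: H.
      by rewrite !gtr0_norm // ltW.
    apply: continuous_in_subspaceT => c; rewrite inE /= in_itv /= => /andP[h1 h2].
    apply: der_cont; apply: H.
    by rewrite !ger0_norm // ltW.
  exists c; move: cI; rewrite in_itv /= => /andP[h1 h2]; split.
    by rewrite !gtr0_norm // ltW.
  by rewrite E subr0.
- by exists 0; rewrite hb normr0 subrr mulr0.

Qed.

Lemma e_entry N (i l : 'I_N) : (delta_mx 0 i : 'rV[R]_N) 0 l = (i == l)%:R.
Proof. by rewrite mxE eqxx eq_sym. Qed.

Lemma F_est (N : nat) (phi : 'rV[R]_N -> R) (x w : 'rV[R]_N) (e' : R) :
  (forall z, `|z - x| <= `|w| -> forall i : 'I_N, derivable phi z (delta_mx 0 i) /\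
      `|derive phi z (delta_mx 0 i) - derive phi x (delta_mx 0 i)| <= e') ->
  `|phi (x + w) - phi x - \sum_(i < N) w 0 i * derive phi x (delta_mx 0 i)|
     <= N%:R * e' * `|w|.
Proof.
move=> H.
case: N phi x w H => [|N] phi x w H.
  have -> : w = 0 by apply/matrixP => i [].
  by rewrite addr0 subrr big_ord0 subrr normr0 mul0r mul0r.
have e'0 : 0 <= e'.
  have hx : `|x - x| <= `|w| by rewrite subrr normr0 normr_ge0.
  have [_ ] := H x hx ord0.
  by rewrite subrr normr0.
pose p (k : nat) : 'rV[R]_N.+1 := x + \row_l (if (l < k)%N then w 0 l else 0).
have p0 : p 0%N = x.
  by rewrite /p; apply/matrixP => i j; rewrite !mxE /= addr0.
have pN : p N.+1 = x + w.
  by rewrite /p; congr (_ + _); apply/matrixP => i j; rewrite !mxE ltn_ord (ord1 i).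
have pS (i : 'I_N.+1) : p i.+1 = p i + w 0 i *: delta_mx 0 i.
  rewrite /p -addrA; congr (_ + _); apply/matrixP => a l; rewrite !mxE (ord1 a) eqxx /=.
  rewrite ltnS leq_eqVlt; case: (eqVneq l i) => [->|li] /=.
    by rewrite ltnn eqxx add0r mulr1.
  by rewrite (_ : (l == i :> nat) = false) ?mulr0 ?addr0 //; exact/negbTE.
have pz (i : 'I_N.+1) (s : R) : `|s| <= `|w 0 i| -> `|p i + s *: delta_mx 0 i - x| <= `|w|.
  move=> hs; apply: mx_norm_le => // a l.
  rewrite /p addrAC (addrC x) addrK !mxE (ord1 a) eqxx /=.
  case: ifPn => hl.
    have -> : (l == i) = false by apply/negbTE; rewrite neq_ltn hl.
    by rewrite mulr0 addr0 mx_coord_le.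
  rewrite add0r; case: (eqVneq l i) => [_|_].
    by rewrite mulr1 (le_trans hs) // mx_coord_le.
  by rewrite mulr0 normr0.
have tele : phi (x + w) - phi x = \sum_(i < N.+1) (phi (p i.+1) - phi (p i)).
  by rewrite -pN -[in phi x]p0 -(telescope_sumr (fun k => phi (p k)) (leq0n N.+1)) big_mkord.
rewrite tele -sumrB.
apply: le_trans (ler_norm_sum _ _ _) _.
rewrite (_ : N.+1%:R * e' * `|w| = \sum_(i < N.+1) (e' * `|w|)); last first.
  by rewrite sumr_const card_ord -mulrA mulr_natl.
apply: ler_sum => i _.
pose g := fun s : R => phi (p i + s *: delta_mx 0 i).
pose dg := fun s : R => derive phi (p i + s *: delta_mx 0 i) (delta_mx 0 i).
have [c [hc E]] : exists c, `|c| <= `|w 0 i| /\ g (w 0 i) - g 0 = dg c * w 0 i.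
  apply: MVT_sym => t ht; apply: line_der.
  by have [] := H _ (pz i t ht) i.
have -> : phi (p i.+1) - phi (p i) = g (w 0 i) - g 0.
  by rewrite /g pS scale0r addr0.
rewrite E /dg [w 0 i * _]mulrC -mulrBl normrM.
apply: ler_pM => //.
  by have [_] := H _ (pz i c hc) i.
exact: mx_coord_le.
Qed.

End PartB2.
Section PartB3.
Context {R : realType}.

Lemma diff_from_eps N M (h : 'rV[R]_N -> 'rV[R]_M) x (df : {linear 'rV[R]_N -> 'rV[R]_M}) :
  continuous df ->
  (forall eps : R, 0 < eps -> \forall w \near (0 : 'rV[R]_N), `|h (w + x) - h x - df w| <= eps * `|w|) ->
  differentiable h x.
Proof.
move=> cdf L.
have P : exists df0 : {linear 'rV[R]_N -> 'rV[R]_M}, continuous df0 /\ forall y, h y = h (lim (nbhs x)) + df0 (y - lim (nbhs x)) +o_(y \near x) (y - lim (nbhs x)).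
  exists df; split => //.
  rewrite lim_id //.
  suff E : h = (fun y => h x + df (y - x)) +o_ x (fun y => y - x).
    by move=> y; rewrite {1}E.
  apply/eqaddoP => eps eps0.
  have := L eps eps0; rewrite (near_shift x 0).
  apply: filterS => y /=.
  by rewrite sub0r subrK opprD addrA.
apply/diffP. exact: getPex P.
Qed.

Lemma mx_cont_entry {T : topologicalType} a b (f : T -> 'M[R]_(a, b)) x :
  (forall i j, {for x, continuous (fun y => f y i j)}) -> {for x, continuous f}.
Proof.
move=> c; apply/cvgrPdist_lt => e e0.
have H : \forall y \near x, forall ij : 'I_a * 'I_b, `|f x ij.1 ij.2 - f y ij.1 ij.2| < e / 2.
  apply: (@filter_forall _ _ (fun ij y => `|f x ij.1 ij.2 - f y ij.1 ij.2| < e / 2) _ (nbhs_filter x)) => ij.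
  by have /cvgrPdist_lt := c ij.1 ij.2; apply; rewrite divr_gt0.
apply: filterS H => y H.
apply: (@le_lt_trans _ _ (e / 2)); last by rewrite ltr_pdivrMr // ltr_pMr // ltr1n.
apply: mx_norm_le; first by rewrite divr_ge0 // ltW.
by move=> i j; have := H (i, j); rewrite !mxE => /ltW.
Qed.

Lemma cont_sum {T : topologicalType} {W : normedModType R} N (F : 'I_N -> T -> W) x :
  (forall i, {for x, continuous (F i)}) -> {for x, continuous (fun y => \sum_(i < N) F i y)}.
Proof.
elim: N F => [|N IH] F hF.
  have -> : (fun y => \sum_(i < 0) F i y) = (fun _ => 0) by apply/funext => y; rewrite big_ord0.
  exact: cvg_cst.
have -> : (fun y => \sum_(i < N.+1) F i y) =
   (fun y => \sum_(i < N) F (widen_ord (leqnSn N) i) y + F ord_max y).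
  by apply/funext => y; rewrite big_ord_recr.
apply: cvgD; last exact: hF.
exact: (IH (fun i => F (widen_ord (leqnSn N) i))).
Qed.

Lemma mulmx_cont a b c (J : 'M[R]_(b, c)) : continuous (fun w : 'M[R]_(a, b) => w *m J).
Proof.
move=> w; apply: mx_cont_entry => i j.
have -> : (fun y : 'M[R]_(a, b) => (y *m J) i j) = (fun y => \sum_(l < b) y i l * J l j).
  by apply/funext => y; rewrite mxE.
apply: cont_sum => l.
have H := (@continuousM _ _ (fun y : 'M[R]_(a, b) => y i l) (fun=> J l j) w (@coord_continuous R a b i l w) (cvg_cst _)).
apply: H; exact: (nbhs_filter w).
Qed.

Lemma F_diff N M (S : set 'rV[R]_N) (h : 'rV[R]_N -> 'rV[R]_M) x :
  open S -> S x -> (forall y, S y -> forall v, derivable h y v) ->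
  (forall i, {for x, continuous (fun y => derive h y (delta_mx 0 i))}) ->
  differentiable h x.
Proof.
move=> oS Sx dh ch.
pose J : 'M[R]_(N, M) := \matrix_(i, j) (derive h x (delta_mx 0 i)) 0 j.
apply: (@diff_from_eps _ _ _ _ (mulmxr J)); first exact: mulmx_cont.
move=> eps eps0.
pose e' := eps / (N%:R + 1).
have e'0 : 0 < e' by rewrite divr_gt0 // ltr_wpDl.
have hS : \forall y \near x, S y by exact: open_nbhs_of oS Sx.
have hD : \forall y \near x, forall ij : 'I_N * 'I_M,
    `|derive h x (delta_mx 0 ij.1) 0 ij.2 - derive h y (delta_mx 0 ij.1) 0 ij.2| < e'.
  apply: (@filter_forall _ _ (fun ij y => `|derive h x (delta_mx 0 ij.1) 0 ij.2 - derive h y (delta_mx 0 ij.1) 0 ij.2| < e') _ (nbhs_filter x)) => ij.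
  have c : {for x, continuous (fun y => derive h y (delta_mx 0 ij.1) 0 ij.2)}.
    apply: (@continuous_comp _ _ _ (fun y => derive h y (delta_mx 0 ij.1)) (fun w : 'rV[R]_M => w 0 ij.2)).
      exact: ch.
    exact: (@coord_continuous R 1 M 0 ij.2).
  by move/cvgrPdist_lt : c; apply.
have H2 : \forall y \near x, S y /\ forall ij : 'I_N * 'I_M,
    `|derive h x (delta_mx 0 ij.1) 0 ij.2 - derive h y (delta_mx 0 ij.1) 0 ij.2| < e'.
  by apply: filterI.
move: H2 => /nbhs_ballP [d /= d0 dB].
apply/nbhs_ballP; exists d => // w Bw.
have wd : `|w| < d by move: Bw; rewrite -ball_normE /= sub0r normrN.
apply: mx_norm_le; first by rewrite mulr_ge0 // ltW.
move=> a j; rewrite (ord1 a).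
pose phi := fun z : 'rV[R]_N => h z 0 j.
have Hz : forall z, `|z - x| <= `|w| -> forall i : 'I_N,
    derivable phi z (delta_mx 0 i) /\
    `|derive phi z (delta_mx 0 i) - derive phi x (delta_mx 0 i)| <= e'.
  move=> z zx i.
  have Bz : ball x d z by rewrite -ball_normE /= distrC (le_lt_trans zx).
  have [Sz Dz] := dB _ Bz.
  have [d1 e1] := lin_der (lcont_coord j) (dh z Sz (delta_mx 0 i)).
  have [d2 e2] := lin_der (lcont_coord j) (dh x Sx (delta_mx 0 i)).
  split; first exact: d1.
  rewrite /phi -/(((fun w : 'rV[R]_M => w 0 j) \o h)) e1 e2 distrC.
  exact: ltW (Dz (i, j)).
have := F_est Hz.
rewrite !mxE [w + x]addrC.
have -> : \sum_(l < N) w 0 l * J l j = \sum_(i < N) w 0 i * derive phi x (delta_mx 0 i).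
  apply: eq_bigr => i _; rewrite mxE.
  have [_ e2] := lin_der (lcont_coord j) (dh x Sx (delta_mx 0 i)).
  by rewrite /phi -/(((fun w : 'rV[R]_M => w 0 j) \o h)) e2.
move=> Hle; apply: (le_trans Hle).
rewrite ler_wpM2r // /e' mulrA ler_pdivrMr ?ltr_wpDl // mulrC ler_wpM2l ?ltW //.
by rewrite ltrDl.
Qed.

End PartB3.
Section PartC.
Context {R : realType}.

Lemma derive1P_val {V W : normedModType R} (f : V -> W) x v :
  derive f x v = derive (fun h : R => f (h *: v + x)) 0 1.
Proof.
rewrite /derive; set g1 := fun h => h^-1 *: _; set g2 := fun h => h^-1 *: _.
suff -> : g1 = g2 by [].
by rewrite funeqE /g1 /g2 => h /=; rewrite addr0 scale0r add0r [_%:A]mulr1.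
Qed.

Lemma chain_der {V : normedModType R} N M (h : 'rV[R]_N -> 'rV[R]_M) (k : V -> 'rV[R]_N) x v :
  differentiable h (k x) -> derivable k x v ->
  derivable (h \o k) x v /\
  derive (h \o k) x v = \sum_(i < N) (derive k x v) 0 i *: derive h (k x) (delta_mx 0 i).
Proof.
move=> dh dk.
pose g := fun t : R => k (t *: v + x).
have g0 : g 0 = k x by rewrite /g scale0r add0r.
have dg : differentiable g 0 by apply/derivable1_diffP; move/derivable1P : dk.
have dhg : differentiable (h \o g) 0 by apply: differentiable_comp; rewrite // g0.
have E : derive (h \o k) x v = derive (h \o g) 0 1 by rewrite derive1P_val.
split.
  apply/derivable1P; exact/derivable1_diffP.
have dg1 : 'd g 0 1 = derive k x v.
  by rewrite -deriveE // (derive1P_val k).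
rewrite E deriveE // diff_comp ?g0 //= dg1.
rewrite {1}[derive k x v]row_sum_delta linear_sum /=.
apply: eq_bigr => i _; rewrite linearZ /= (@deriveE _ _ _ h) //.
Qed.

Lemma chain_CkLe {V : normedModType R} N M (S : set 'rV[R]_N) (T : set V)
    (k : V -> 'rV[R]_N) :
  open S -> open T -> SM T k -> (forall x, T x -> S (k x)) ->
  forall j (h : 'rV[R]_N -> 'rV[R]_M), SM S h -> CkLe j T (h \o k).
Proof.
move=> oS oT sk kTS; elim => [|j IH] h sh.
  move=> i; rewrite leqn0 => /eqP -> /= x Tx.
  apply: continuous_comp; first exact: (sk 0%N x Tx).
  exact: (sh 0%N _ (kTS x Tx)).
move=> i; rewrite leq_eqVlt => /orP [/eqP ->|]; last by rewrite ltnS; exact: IH.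
have dh : forall x, T x -> differentiable h (k x).
  move=> x Tx; apply: (F_diff oS (kTS x Tx)).
    by move=> y Sy v; have [d _] := sh 1%N; exact: d.
  by move=> i0; have [_ c] := sh 1%N; exact: (c _ _ (kTS x Tx)).
have dk : forall x, T x -> forall v, derivable k x v.
  by move=> x Tx v; have [d _] := sk 1%N; exact: d.
split.
  by move=> x Tx v; have [] := chain_der (dh x Tx) (dk x Tx v).
move=> v.
apply: (Ck_loc (h1 := fun x => \sum_(i < N) (derive k x v) 0 i *:
                 ((fun y => derive h y (delta_mx 0 i)) \o k) x)) => //.
  by move=> x Tx; have [_ ->] := chain_der (dh x Tx) (dk x Tx v).
apply: (@CkLe_sum _ _ _ j) => //.
move=> i0; apply: CkLe_sclv => //.
  apply: (CkLe_post (h := fun x => derive k x v) (L := fun w : 'rV[R]_N => w 0 i0)) => //.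
    exact: lcont_coord.
  exact/SM_CkLe/SM_der.
exact/IH/SM_der.
Qed.

Lemma chain_SM {V : normedModType R} N M (S : set 'rV[R]_N) (T : set V)
    (k : V -> 'rV[R]_N) (h : 'rV[R]_N -> 'rV[R]_M) :
  open S -> open T -> SM T k -> (forall x, T x -> S (k x)) -> SM S h ->
  SM T (h \o k).
Proof. by move=> oS oT sk kTS sh j; exact: (chain_CkLe oS oT sk kTS sh (leqnn j)). Qed.

End PartC.
Section PartD.
Context {R : realType}.

Lemma cont_fst {X Y : normedModType R} : continuous (@fst X Y).
Proof. by move=> [x y]; exact: cvg_fst. Qed.

Lemma cont_snd {X Y : normedModType R} : continuous (@snd X Y).
Proof. by move=> [x y]; exact: cvg_snd. Qed.

Lemma lcont_fst {X Y : normedModType R} : lcont (@fst X Y).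
Proof. by split; [exact: cont_fst | split]. Qed.

Lemma lcont_snd {X Y : normedModType R} : lcont (@snd X Y).
Proof. by split; [exact: cont_snd | split]. Qed.

Lemma lcont_comp {X Y Z : normedModType R} (f : X -> Y) (g : Y -> Z) :
  lcont f -> lcont g -> lcont (g \o f).
Proof.
move=> [cf [fD fZ]] [cg [gD gZ]]; split.
  by move=> x; apply: continuous_comp; [exact: cf | exact: cg].
by split => * /=; rewrite ?fD ?gD ?fZ ?gZ.
Qed.

Lemma lcont_pair {X Y Z : normedModType R} (f : X -> Y) (g : X -> Z) :
  lcont f -> lcont g -> lcont (fun x => (f x, g x)).
Proof.
move=> [cf [fD fZ]] [cg [gD gZ]]; split.
  by move=> x; apply: cvg_pair; [exact: cf | exact: cg].
by split => *; rewrite ?fD ?gD ?fZ ?gZ.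
Qed.

Lemma lcont_id {X : normedModType R} : lcont (@id X).
Proof. by split => //; move=> x; exact: cvg_id. Qed.

Lemma lcont_zero {X Y : normedModType R} : lcont (fun _ : X => (0 : Y)).
Proof.
split; first by move=> x; exact: cvg_cst.
by split => *; rewrite ?addr0 ?scaler0.
Qed.

Record FD (X : normedModType R) := MkFD {
  fdN : nat;
  enc : X -> 'rV[R]_fdN;
  dec : 'rV[R]_fdN -> X;
  enc_l : lcont enc;
  dec_l : lcont dec;
  decK : forall x, dec (enc x) = x }.

Lemma lcont_mxvec a b : lcont (@mxvec R a b).
Proof.
split; last by split => *; rewrite ?linearD ?linearZ.
move=> A; apply: mx_cont_entry => i k; rewrite (ord1 i).
case/mxvec_indexP: k => r c.
have -> : (fun y : 'M[R]_(a, b) => mxvec y 0 (mxvec_index r c)) = (fun y => y r c).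
  by apply/funext => y; rewrite mxvecE.
exact: (@coord_continuous R a b r c A).
Qed.

Lemma lcont_vec_mx a b : lcont (@vec_mx R a b).
Proof.
split; last by split => *; rewrite ?linearD ?linearZ.
move=> v; apply: mx_cont_entry => r c.
have -> : (fun y : 'rV[R]_(a * b) => vec_mx y r c) = (fun y => y 0 (mxvec_index r c)).
  by apply/funext => y; rewrite -[in RHS](vec_mxK y) mxvecE.
exact: (@coord_continuous R 1 (a * b) 0 (mxvec_index r c) v).
Qed.

Definition FD_mx a b : FD 'M[R]_(a, b) :=
  @MkFD _ (a * b) (@mxvec R a b) (@vec_mx R a b) (lcont_mxvec a b) (lcont_vec_mx a b) (@mxvecK R a b).

Lemma lcont_row_mx {X Y : normedModType R} n1 n2 (f : X -> 'rV[R]_n1) (g : Y -> 'rV[R]_n2) :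
  lcont f -> lcont g -> lcont (fun p : X * Y => row_mx (f p.1) (g p.2)).
Proof.
move=> [cf [fD fZ]] [cg [gD gZ]]; split; last first.
  by split => *; rewrite /= ?fD ?gD ?fZ ?gZ ?add_row_mx ?scale_row_mx.
move=> p; apply: mx_cont_entry => i k; rewrite (ord1 i).
rewrite -[k]splitK; case: (fintype.split k) => l /=.
  have -> : (fun y : X * Y => row_mx (f y.1) (g y.2) 0 (lshift n2 l)) = (fun y => f y.1 0 l).
    by apply/funext => y; rewrite row_mxEl.
  apply: (@continuous_comp _ _ _ fst (fun x => f x 0 l)); first exact: cont_fst.
  apply: (@continuous_comp _ _ _ f (fun w : 'rV[R]_n1 => w 0 l)); first exact: cf.
  exact: (@coord_continuous R 1 n1 0 l).
have -> : (fun y : X * Y => row_mx (f y.1) (g y.2) 0 (rshift n1 l)) = (fun y => g y.2 0 l).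
  by apply/funext => y; rewrite row_mxEr.
apply: (@continuous_comp _ _ _ snd (fun x => g x 0 l)); first exact: cont_snd.
apply: (@continuous_comp _ _ _ g (fun w : 'rV[R]_n2 => w 0 l)); first exact: cg.
exact: (@coord_continuous R 1 n2 0 l).
Qed.

Lemma lcont_lsub n1 n2 : lcont (fun r : 'rV[R]_(n1 + n2) => lsubmx r).
Proof.
split; first exact: continuous_lsubmx.
by split => *; rewrite ?linearD ?linearZ.
Qed.

Lemma lcont_rsub n1 n2 : lcont (fun r : 'rV[R]_(n1 + n2) => rsubmx r).
Proof.
split; first exact: continuous_rsubmx.
by split => *; rewrite ?linearD ?linearZ.
Qed.

Definition FD_prod {X Y : normedModType R} (fx : FD X) (fy : FD Y) : FD (X * Y)%type.
Proof.
refine (@MkFD _ (fdN fx + fdN fy)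
   (fun p => row_mx (enc fx p.1) (enc fy p.2))
   (fun r => (@dec _ fx (lsubmx r), @dec _ fy (rsubmx r))) _ _ _).
- exact: lcont_row_mx (enc_l fx) (enc_l fy).
- apply: lcont_pair.
    exact: lcont_comp (lcont_lsub _ _) (dec_l fx).
  exact: lcont_comp (lcont_rsub _ _) (dec_l fy).
- by move=> [x y] /=; rewrite row_mxKl row_mxKr !decK.
Defined.

End PartD.
Section PartE1.
Context {R : realType}.

Lemma open_pre {V X : normedModType R} (T : set V) (f : V -> X) (O : set X) :
  open T -> (forall x, T x -> {for x, continuous f}) -> open O -> open (T `&` f @^-1` O).
Proof.
move=> oT cf oO; rewrite openE => x [Tx Ox] /=; rewrite /interior.
apply: filterI; first exact: open_nbhs_of oT Tx.
exact: (cf x Tx) _ (open_nbhs_of oO Ox).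
Qed.

Lemma SM_id {V : normedModType R} : SM setT (@id V).
Proof.
move=> k; case: k => [|k] /=.
  by move=> x _; exact: cvg_id.
split; first by move=> x _ v; exact: derivable_id.
move=> v; apply: (Ck_loc (h1 := fun _ => v)); first exact: openT.
  by move=> x _; rewrite derive_id.
exact: Ck_cst openT.
Qed.

Lemma SN_lin {V W : normedModType R} (L : V -> W) p : lcont L -> smooth_near L p.
Proof.
move=> hL; exists setT; split => //; split; first exact: openT.
have := SM_post openT hL SM_id; done.
Qed.

Lemma SN_cst {V W : normedModType R} (c : W) p : smooth_near (fun _ : V => c) p.
Proof.
by exists setT; split => //; split; [exact: openT | move=> k; exact: Ck_cst openT].
Qed.

Lemma SN_post {V W W' : normedModType R} (h : V -> W) (L : W -> W') p :
  lcont L -> smooth_near h p -> smooth_near (L \o h) p.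
Proof.
move=> hL [A [Ap [oA sA]]]; exists A; split => //; split => //.
exact: SM_post oA hL sA.
Qed.

Lemma SN_pre {V V' W : normedModType R} (L : V' -> V) (h : V -> W) p :
  lcont L -> smooth_near h (L p) -> smooth_near (h \o L) p.
Proof.
move=> hL [A [Ap [oA sA]]]; exists (L @^-1` A); split => //; split.
  by apply: open_comp => // x _; exact: hL.1.
exact: SM_pre oA hL sA.
Qed.

Lemma SN_add {V W : normedModType R} (f g : V -> W) p :
  smooth_near f p -> smooth_near g p -> smooth_near (fun x => f x + g x) p.
Proof.
move=> [A [Ap [oA sA]]] [B [Bp [oB sB]]]; exists (A `&` B); split => //.
have oAB : open (A `&` B) by exact: openI.
split => // k; apply: Ck_add => //.
  by apply: Ck_sub (sA k) => x [].
by apply: Ck_sub (sB k) => x [].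
Qed.

Lemma SN_loc {V W : normedModType R} (h1 h2 : V -> W) p (O : set V) :
  open O -> O p -> (forall x, O x -> h1 x = h2 x) -> smooth_near h1 p -> smooth_near h2 p.
Proof.
move=> oO Op e [A [Ap [oA sA]]]; exists (A `&` O); split => //.
have oAO : open (A `&` O) by exact: openI.
split => // k; apply: (Ck_loc (h1 := h1)) => //.
  by move=> x [_ Ox]; exact: e.
by apply: Ck_sub (sA k) => x [].
Qed.

Lemma SN_comp {V X : normedModType R} (fd : FD X) M (h : X -> 'rV[R]_M) (k : V -> X)
    p (S : set X) :
  open S -> S (k p) -> SM S h -> smooth_near k p -> smooth_near (h \o k) p.
Proof.
move=> oS Skp sh [T [Tp [oT sk]]].
pose S' := (@dec _ _ fd) @^-1` S.
have oS' : open S' by apply: open_comp => // x _; exact: (dec_l fd).1.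
have sh' : SM S' (h \o (@dec _ _ fd)) by exact: SM_pre oS (dec_l fd) sh.
have sk' : SM T (enc fd \o k) by exact: SM_post oT (enc_l fd) sk.
pose T' := T `&` (enc fd \o k) @^-1` S'.
have oT' : open T'.
  apply: open_pre => // x Tx; apply: continuous_comp; first exact: (sk 0%N x Tx).
  exact: (enc_l fd).1.
have kT : forall x, T' x -> S' ((enc fd \o k) x) by move=> x [].
have sk'' : SM T' (enc fd \o k) by move=> i; apply: Ck_sub (sk' i) => x [].
have := chain_SM oS' oT' sk'' kT sh'.
have -> : (h \o (@dec _ _ fd)) \o (enc fd \o k) = h \o k.
  by apply/funext => x /=; rewrite decK.
move=> sm; exists T'; split; last by split.
split => //=; rewrite /S' /= decK //.
Qed.

End PartE1.

Section PartE2.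
Context {R : realType} {m : nat}.

Definition reidx a b (s : 'I_b -> 'I_a) (M : 'M[R]_(a, m)) : 'M[R]_(b, m) :=
  \matrix_(i, j) M (s i) j.

Lemma lcont_reidx a b (s : 'I_b -> 'I_a) : lcont (@reidx a b s).
Proof.
split; last by split => *; apply/matrixP => i j; rewrite !mxE.
move=> M; apply: mx_cont_entry => i j.
have -> : (fun y => @reidx a b s y i j) = (fun y : 'M[R]_(a, m) => y (s i) j).
  by apply/funext => y; rewrite mxE.
exact: (@coord_continuous R a m (s i) j M).
Qed.

Lemma reidx_cwin a b (s : 'I_b -> 'I_a) (c : 'rV[R]_m) : reidx s (cwin a c) = cwin b c.
Proof. by apply/matrixP => i j; rewrite !mxE. Qed.

Lemma rev_win_reidx L (M : 'M[R]_(L, m)) : rev_win M = reidx (@rev_ord L) M.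
Proof. by apply/matrixP => i j; rewrite !mxE. Qed.

Lemma rev_win_cwin L (c : 'rV[R]_m) : rev_win (cwin L c) = cwin L c.
Proof. by rewrite rev_win_reidx reidx_cwin. Qed.

Lemma rev_winK L (M : 'M[R]_(L, m)) : rev_win (rev_win M) = M.
Proof. by apply/matrixP => i j; rewrite !mxE rev_ordK. Qed.

Lemma win_cst (c : 'rV[R]_m) a L : win (fun _ => c) a L = cwin L c.
Proof. by apply/matrixP => i j; rewrite !mxE. Qed.

Lemma mx0_eq (M N : 'M[R]_(0, m)) : M = N.
Proof. by apply/matrixP => -[]. Qed.

Lemma win_ball (y : int -> 'rV[R]_m) (y0 : 'rV[R]_m) (e : R) a L : 0 < e ->
  (forall k, ball y0 (e / 2) (y k)) -> ball (cwin L y0) e (win y a L).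
Proof.
move=> e0 H; rewrite -ball_normE /=.
apply: (@le_lt_trans _ _ (e / 2)); last by rewrite ltr_pdivrMr // ltr_pMr // ltr1n.
apply: mx_norm_le; first by rewrite divr_ge0 // ltW.
move=> i j; rewrite !mxE.
have := H (a + (i : nat)%:Z); rewrite -ball_normE /= => /ltW; apply: le_trans.
have := mx_coord_le (y0 - y (a + (i : nat)%:Z)) 0 j; rewrite !mxE //.
Qed.

End PartE2.
Section PartF.
Context {R : realType} {n m : nat}.
Local Notation St := 'rV[R]_n.
Local Notation In := 'rV[R]_m.

Lemma SN_pair {V X Y : normedModType R} (f : V -> X) (g : V -> Y) p :
  smooth_near f p -> smooth_near g p -> smooth_near (fun x => (f x, g x)) p.
Proof.
move=> sf sg.
have h1 : smooth_near ((fun y : X => (y, (0 : Y))) \o f) p.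
  apply: SN_post => //; apply: lcont_pair; [exact: lcont_id | exact: lcont_zero].
have h2 : smooth_near ((fun y : Y => ((0 : X), y)) \o g) p.
  apply: SN_post => //; apply: lcont_pair; [exact: lcont_zero | exact: lcont_id].
have := SN_add h1 h2.
have -> : (fun x => ((fun y : X => (y, (0 : Y))) \o f) x + ((fun y : Y => ((0 : X), y)) \o g) x)
   = (fun x => (f x, g x)).
  apply/funext => x /=.
  by change ((f x + 0, 0 + g x) = (f x, g x)); rewrite addr0 add0r.
done.
Qed.

Definition LI (f : St -> In -> St) (g : St -> In -> In) psix psiu (x0 : St) (u0 : In)
   (A B : set (St * In)) :=
    A (x0, u0) /\ B (f x0 u0, g x0 u0) /\
    smooth_on A (fun p => (f p.1 p.2, g p.1 p.2)) /\
    smooth_on B (fun q => (psix q.1 q.2, psiu q.1 q.2)) /\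
    (forall p, A p -> B (f p.1 p.2, g p.1 p.2) /\
       psix (f p.1 p.2) (g p.1 p.2) = p.1 /\ psiu (f p.1 p.2) (g p.1 p.2) = p.2) /\
    (forall q, B q -> A (psix q.1 q.2, psiu q.1 q.2) /\
       f (psix q.1 q.2) (psiu q.1 q.2) = q.1 /\ g (psix q.1 q.2) (psiu q.1 q.2) = q.2).

Lemma LI_local f g px pu x0 u0 :
  local_inverse f g px pu x0 u0 <-> exists A B, LI f g px pu x0 u0 A B.
Proof. by []. Qed.

Lemma LI_sym f g px pu x0 u0 A B : LI f g px pu x0 u0 A B -> f x0 u0 = x0 ->
  LI px pu f g x0 (g x0 u0) B A.
Proof.
move=> [Ax [Bx [sA [sB [HA HB]]]]] e.
have [_ [e1 e2]] := HA _ Ax; rewrite /= e in e1 e2.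
split; first by move: Bx; rewrite e.
split; first by rewrite e1 e2.
by do 3 split => //.
Qed.

End PartF.
Section PartG.
Context {R : realType} {n m : nat}.
Local Notation St := 'rV[R]_n.
Local Notation In := 'rV[R]_m.

Lemma L1 (F : St -> In -> St) (G : St -> In -> In) PX PU (x0 : St) (u0 : In)
   (A B : set (St * In)) (Q R2 : nat)
   (phi : St -> In -> 'M[R]_(Q, m) -> In) (phi' : 'M[R]_(Q, m) -> St -> In -> In) :
  LI F G PX PU x0 u0 A B -> F x0 u0 = x0 ->
  flat_output_R F G x0 u0 0 Q (fun _ => phi) 0 R2 ->
  (forall eta z v, B (z, v) -> phi' eta z v = phi (PX z v) (PU z v) (rev_win eta)) ->
  flat_output_R PX PU x0 (G x0 u0) Q 0 (fun a z v _ => phi' a z v) R2 0.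
Proof.
move=> hLI Feq.
have [Ax [Bx [[oA sA] [[oB sB] [HA HB]]]]] := hLI.
rewrite /flat_output_R /=.
move=> [Fx [Fu [sphi [sFx [sFu [U [Y [nU [nY [C1 C2]]]]]]]]]] hphi'.
set v0 := G x0 u0.
set y0 := phi x0 u0 (cwin Q u0).
have [_ [PXe PUe]] := HA _ Ax; rewrite /= Feq -/v0 in PXe PUe.
have Bx0 : B (x0, v0) by move: Bx; rewrite Feq.
rewrite PUe.
have y0e : phi' (cwin Q u0) x0 v0 = y0.
  by rewrite hphi' // PXe PUe rev_win_cwin.
rewrite y0e.
have [EX EU] : x0 = Fx (cwin R2 y0) /\ u0 = Fu (cwin R2.+1 y0).
  have := C1 (fun _ => x0) (fun _ => u0) _ _ 0.
  have -> : (fun k0 : int => phi x0 u0 (win (fun _ => u0) (k0 + 1) Q)) = (fun _ => y0).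
    by apply/funext => k0; rewrite win_cst.
  rewrite !win_cst; apply.
    by move=> k; rewrite Feq.
  by move=> k; exact: nbhs_singleton nU.
pose e1 : R2 = (R2 + 0)%N := esym (addn0 R2).
pose sx := fun i : 'I_R2 => cast_ord e1 (rev_ord i).
pose s2 := fun i : 'I_R2.+1 => cast_ord (congr1 S e1) (rev_ord i).
pose s1 := fun i : 'I_R2 => s2 (widen_ord (leqnSn R2) i).
have sxE : forall i : 'I_R2, (sx i : nat) = (R2 - i.+1)%N by [].
have s2E : forall i : 'I_R2.+1, (s2 i : nat) = (R2 - i)%N by move=> i; rewrite /s2 /= subSS.
have s1E : forall i : 'I_R2, (s1 i : nat) = (R2 - i)%N by move=> i; rewrite /s1 s2E.
pose Fx' := fun M : 'M[R]_(R2 + 0, m) => Fx (reidx sx M).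
pose Fu' := fun M : 'M[R]_((R2 + 0).+1, m) => G (Fx (reidx s1 M)) (Fu (reidx s2 M)).
have sFx' : smooth_near Fx' (cwin (R2 + 0) y0).
  apply: (SN_pre (h := Fx) (lcont_reidx sx)); rewrite reidx_cwin; exact: sFx.
have sFu' : smooth_near Fu' (cwin (R2 + 0).+1 y0).
  pose k := fun M : 'M[R]_((R2 + 0).+1, m) => (Fx (reidx s1 M), Fu (reidx s2 M)).
  have -> : Fu' = (fun q : St * In => G q.1 q.2) \o k by [].
  apply: (SN_comp (FD_prod (FD_mx 1 n) (FD_mx 1 m)) oA).
  - by rewrite /k /= !reidx_cwin -EX -EU.
  - exact: (SM_post oA lcont_snd sA).
  apply: SN_pair.
    apply: (SN_pre (h := Fx) (lcont_reidx s1)); rewrite reidx_cwin; exact: sFx.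
  apply: (SN_pre (h := Fu) (lcont_reidx s2)); rewrite reidx_cwin; exact: sFu.
have lrev : lcont (@rev_win R m Q).
  have -> : @rev_win R m Q = reidx (@rev_ord Q) by apply/funext => M; rewrite rev_win_reidx.
  exact: lcont_reidx.
have sphi' : smooth_near
      (fun w : 'M[R]_(Q, m) * (St * (In * 'M[R]_(0, m))) => phi' w.1 w.2.1 w.2.2.1)
      (cwin Q u0, (x0, (v0, cwin 0 v0))).
  pose P := fun w : 'M[R]_(Q, m) * (St * (In * 'M[R]_(0, m))) => (w.2.1, w.2.2.1).
  have lP : lcont P.
    apply: lcont_pair.
      exact: lcont_comp lcont_snd lcont_fst.
    exact: lcont_comp (lcont_comp lcont_snd lcont_snd) lcont_fst.
  pose psi := fun q : St * In => (PX q.1 q.2, PU q.1 q.2).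
  have spsi : smooth_near psi (x0, v0) by exists B; split => //; split.
  pose Psi := fun w : 'M[R]_(Q, m) * (St * (In * 'M[R]_(0, m))) =>
     ((0 : 'M[R]_(0, m)), (PX w.2.1 w.2.2.1, (PU w.2.1 w.2.2.1, rev_win w.1))).
  have sPsi : smooth_near Psi (cwin Q u0, (x0, (v0, cwin 0 v0))).
    apply: SN_pair; first exact: SN_cst.
    apply: SN_pair.
      have -> : (fun w : 'M[R]_(Q, m) * (St * (In * 'M[R]_(0, m))) => PX w.2.1 w.2.2.1)
         = ((@fst _ _) \o psi) \o P by [].
      by apply: SN_pre lP _; apply: SN_post lcont_fst _.
    apply: SN_pair.
      have -> : (fun w : 'M[R]_(Q, m) * (St * (In * 'M[R]_(0, m))) => PU w.2.1 w.2.2.1)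
         = ((@snd _ _) \o psi) \o P by [].
      by apply: SN_pre lP _; apply: SN_post lcont_snd _.
    apply: SN_lin; exact: lcont_comp lcont_fst lrev.
  have [S0 [S0p [oS0 sS0]]] := sphi.
  have := SN_comp (FD_prod (FD_mx 0 m) (FD_prod (FD_mx 1 n) (FD_prod (FD_mx 1 m) (FD_mx Q m))))
     oS0 _ sS0 sPsi.
  move=> /(_ _) H.
  apply: (SN_loc (O := P @^-1` B)) (H _).
  - by apply: open_comp => // w _; exact: lP.1.
  - done.
  - by move=> w Bw /=; rewrite hphi'.
  - by rewrite /Psi /= PXe PUe rev_win_cwin (mx0_eq 0 (cwin 0 (G x0 u0))).
exists Fx', Fu'.
split; first exact: sphi'.
split; first exact: sFx'.
split; first exact: sFu'.
pose U' := fun q : St * In => B q /\ U (PX q.1 q.2, PU q.1 q.2).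
have nU' : nbhs (x0, v0) U'.
  apply: filterI; first exact: open_nbhs_of oB Bx0.
  have c := sB 0%N _ Bx0.
  have nU2 : nbhs (PX (x0, v0).1 (x0, v0).2, PU (x0, v0).1 (x0, v0).2) U.
    by rewrite /= PXe PUe.
  exact: c _ nU2.
pose Th := fun W : 'M[R]_(R2.+1, m) => (Fx (reidx (widen_ord (leqnSn R2)) W), Fu W).
have cTh : {for cwin R2.+1 y0, continuous Th}.
  apply: (cvg_pair (FF := nbhs_filter _) (FG := nbhs_filter _) (FH := nbhs_filter _)).
    have [S1 [S1p [oS1 sS1]]] := sFx.
    apply: (@continuous_comp _ _ _ (reidx (widen_ord (leqnSn R2))) Fx).
      exact: (lcont_reidx _).1.
    by rewrite reidx_cwin; exact: sS1 0%N _ S1p.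
  have [S1 [S1p [oS1 sS1]]] := sFu.
  exact: sS1 0%N _ S1p.
have nA : nbhs (cwin R2.+1 y0) (Th @^-1` A).
  apply: cTh; rewrite /Th reidx_cwin -EX -EU; exact: open_nbhs_of oA Ax.
move: nA => /nbhs_ballP [eps /= eps0 heps].
pose Y' := fun y => Y y /\ ball y0 (eps / 2) y.
have nY' : nbhs y0 Y'.
  apply: (@filterI _ _ (nbhs_filter y0) _ _ nY); apply: nbhsx_ballx; by rewrite divr_gt0.
exists U', Y'; split; first exact: nU'.
split; first exact: nY'.
split.
  move=> z v trz hU k.
  pose x := fun j : int => z (- j).
  pose u := fun j : int => PU (z (- j - 1)) (v (- j - 1)).
  have hB : forall j, B (z j, v j) by move=> j; case: (hU j).
  have trF : traj F x u.
    move=> j; rewrite /x /u.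
    have e1' : - (j + 1) = - j - 1 by lia.
    rewrite e1'; set a := - j - 1.
    have e2 : - j = a + 1 by rewrite /a; lia.
    rewrite e2 trz /=.
    by have [_ [-> _]] := HB _ (hB a).
  have hUx : forall j, U (x j, u j).
    move=> j; rewrite /x /u; set a := - j - 1.
    have e2 : - j = a + 1 by rewrite /a; lia.
    by rewrite e2 trz; case: (hU a).
  have HC := C1 x u trF hUx.
  pose y := fun j => phi (x j) (u j) (win u (j + 1) Q).
  have Ehat : (fun k0 : int => phi' (win (fun k1 : int => PU (z k1) (v k1)) (k0 - Q%:Z) Q)
                 (z k0) (v k0)) = (fun k0 => y (- k0 - 1)).
    apply/funext => k0; rewrite hphi' //.
    rewrite /y /x /u.
    have e3 : - (- k0 - 1) = k0 + 1 by lia.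
    have e4 : - (- k0 - 1) - 1 = k0 by lia.
    rewrite e4 e3 -trz; congr (phi _ _ _).
    apply/matrixP => -[a ha] j; rewrite !mxE /=; congr (PU (z _) (v _) 0 j); lia.
  rewrite Ehat.
  split.
    have [Hx _] := HC (- k).
    rewrite /Fx'.
    have -> : reidx sx (win (fun k0 => y (- k0 - 1)) (k - R2%:Z) (R2 + 0)) = win y (- k - 0) (0 + R2).
      apply/matrixP => -[a ha] j; rewrite !mxE sxE /=; congr (y _ 0 j); lia.
    by rewrite -Hx /x opprK.
  have [Hx1 Hu1] := HC (- k - 1).
  rewrite /Fu'.
  have -> : reidx s1 (win (fun k0 => y (- k0 - 1)) (k - R2%:Z) (R2 + 0).+1) = win y (- k - 1 - 0) (0 + R2).
    apply/matrixP => -[a ha] j; rewrite !mxE s1E /=; congr (y _ 0 j); lia.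
  have -> : reidx s2 (win (fun k0 => y (- k0 - 1)) (k - R2%:Z) (R2 + 0).+1) = win y (- k - 1 - 0) (0 + R2).+1.
    apply/matrixP => -[a ha] j; rewrite !mxE s2E /=; congr (y _ 0 j); lia.
  rewrite -Hx1 -Hu1 /x /u.
  have e3 : - (- k - 1) = k + 1 by lia.
  have e4 : - (- k - 1) - 1 = k by lia.
  rewrite e4 e3 trz.
  by have [_ [_ ->]] := HB _ (hB k).
move=> haty hY'.
pose y := fun j : int => haty (- j - 1).
have hY : forall j, Y (y j) by move=> j; case: (hY' (- j - 1)).
have [trF hy] := C2 y hY.
pose x := fun j : int => Fx (win y (j - 0%Z) (0 + R2)).
pose u := fun j : int => Fu (win y (j - 0%Z) (0 + R2).+1).
have trx : forall j, x (j + 1) = F (x j) (u j) := trF.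
have hy' : forall j, y j = phi (x j) (u j) (win u (j + 1) Q) := hy.
have inA : forall j, A (x j, u j).
  move=> j.
  have hb : ball (cwin R2.+1 y0) eps (win y (j - 0%Z) R2.+1).
    apply: win_ball => // k; by case: (hY' (- k - 1)).
  have := heps _ hb; rewrite /Th /= /x /u.
  suff -> : reidx (widen_ord (leqnSn R2)) (win y (j - 0%Z) R2.+1) = win y (j - 0%Z) (0 + R2) :> 'M[R]_(0 + R2, m) by [].
  by apply/matrixP => -[a ha] l; rewrite !mxE.
have zE : forall k, Fx' (win haty (k - R2%:Z) (R2 + 0)) = x (- k).
  move=> k; rewrite /Fx' /x; congr Fx; apply/matrixP => -[a ha] l.
  rewrite !mxE sxE /= /y; congr (haty _ 0 l); lia.
have vE : forall k, Fu' (win haty (k - R2%:Z) (R2 + 0).+1) = G (x (- k - 1)) (u (- k - 1)).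
  move=> k; rewrite /Fu' /x /u; congr G.
    congr Fx; apply/matrixP => -[a ha] l.
    rewrite !mxE s1E /= /y; congr (haty _ 0 l); lia.
  congr Fu; apply/matrixP => -[a ha] l.
  rewrite !mxE s2E /= /y; congr (haty _ 0 l); lia.
have zF : forall k, x (- k) = F (x (- k - 1)) (u (- k - 1)).
  move=> k; rewrite -trx; congr x; lia.
split.
  move=> k; rewrite !zE vE (zF k).
  have [_ [-> _]] := HA _ (inA (- k - 1)).
  by rewrite /=; congr x; lia.
move=> k.
have Ez : (fun k0 : int => PU (Fx' (win haty (k0 - R2%:Z) (R2 + 0)))
            (Fu' (win haty (k0 - R2%:Z) (R2 + 0).+1))) = (fun k0 => u (- k0 - 1)).
  apply/funext => k0; rewrite zE vE (zF k0).
  by have [_ [_ ->]] := HA _ (inA (- k0 - 1)).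
rewrite Ez zE vE (zF k).
rewrite hphi'; last exact: (HA _ (inA (- k - 1))).1.
have [_ [e5 e6]] := HA _ (inA (- k - 1)); rewrite /= in e5 e6; rewrite e5 e6.
have -> : haty k = y (- k - 1) by rewrite /y; congr haty; lia.
rewrite hy'; congr phi; apply/matrixP => -[a ha] l; rewrite !mxE /=; congr (u _ 0 l); lia.
Qed.


End PartG.
Section PartG2.
Context {R : realType} {n m : nat}.
Local Notation St := 'rV[R]_n.
Local Notation In := 'rV[R]_m.

Lemma L2 (F : St -> In -> St) (G : St -> In -> In) PX PU (x0 : St) (u0 : In)
   (A B : set (St * In)) (Q R1 : nat)
   (phi : 'M[R]_(Q, m) -> St -> In -> In) (phi' : St -> In -> 'M[R]_(Q, m) -> In) :
  LI F G PX PU x0 u0 A B -> F x0 u0 = x0 ->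
  flat_output_R F G x0 u0 Q 0 (fun a x u _ => phi a x u) R1 0 ->
  (forall z v w, B (z, v) -> phi' z v w = phi (rev_win w) (PX z v) (PU z v)) ->
  flat_output_R PX PU x0 (G x0 u0) 0 Q (fun _ => phi') 0 R1.
Proof.
move=> hLI Feq.
have [Ax [Bx [[oA sA] [[oB sB] [HA HB]]]]] := hLI.
rewrite /flat_output_R /=.
move=> [Fx [Fu [sphi [sFx [sFu [U [Y [nU [nY [C1 C2]]]]]]]]]] hphi'.
set v0 := G x0 u0.
set y0 := phi (cwin Q v0) x0 u0.
have [_ [PXe PUe]] := HA _ Ax; rewrite /= Feq -/v0 in PXe PUe.
have Bx0 : B (x0, v0) by move: Bx; rewrite Feq.
rewrite PUe.
have y0e : phi' x0 v0 (cwin Q v0) = y0.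
  by rewrite hphi' // PXe PUe rev_win_cwin.
rewrite y0e.
have [EX EU] : x0 = Fx (cwin (R1 + 0) y0) /\ u0 = Fu (cwin (R1 + 0).+1 y0).
  have := C1 (fun _ => x0) (fun _ => u0) _ _ 0.
  have -> : (fun k0 : int => phi (win (fun _ => G x0 u0) (k0 - Q%:Z) Q) x0 u0) = (fun _ => y0).
    by apply/funext => k0; rewrite win_cst.
  rewrite !win_cst; apply.
    by move=> k; rewrite Feq.
  by move=> k; exact: nbhs_singleton nU.
pose c0 : (R1 + 0)%N = R1 := addn0 R1.
pose rx := fun i : 'I_(R1 + 0) => rev_ord (cast_ord c0 i).
pose r2 := fun i : 'I_(R1 + 0).+1 => rev_ord (cast_ord (congr1 S c0) i).
pose r1 := fun i : 'I_(R1 + 0) => r2 (widen_ord (leqnSn (R1 + 0)) i).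
have rxE : forall i : 'I_(R1 + 0), (rx i : nat) = (R1 - i.+1)%N by [].
have r2E : forall i : 'I_(R1 + 0).+1, (r2 i : nat) = (R1 - i)%N by move=> i; rewrite /r2 /= subSS.
have r1E : forall i : 'I_(R1 + 0), (r1 i : nat) = (R1 - i)%N by move=> i; rewrite /r1 r2E.
pose Fx' := fun M : 'M[R]_(0 + R1, m) => Fx (reidx rx M).
pose Fu' := fun M : 'M[R]_((0 + R1).+1, m) => G (Fx (reidx r1 M)) (Fu (reidx r2 M)).
have sFx' : smooth_near Fx' (cwin (0 + R1) y0).
  apply: (SN_pre (h := Fx) (lcont_reidx rx)); rewrite reidx_cwin; exact: sFx.
have sFu' : smooth_near Fu' (cwin (0 + R1).+1 y0).
  pose k := fun M : 'M[R]_((0 + R1).+1, m) => (Fx (reidx r1 M), Fu (reidx r2 M)).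
  have -> : Fu' = (fun q : St * In => G q.1 q.2) \o k by [].
  apply: (SN_comp (FD_prod (FD_mx 1 n) (FD_mx 1 m)) oA).
  - by rewrite /k /= !reidx_cwin -EX -EU.
  - exact: (SM_post oA lcont_snd sA).
  apply: SN_pair.
    apply: (SN_pre (h := Fx) (lcont_reidx r1)); rewrite reidx_cwin; exact: sFx.
  apply: (SN_pre (h := Fu) (lcont_reidx r2)); rewrite reidx_cwin; exact: sFu.
have lrev : lcont (@rev_win R m Q).
  have -> : @rev_win R m Q = reidx (@rev_ord Q) by apply/funext => M; rewrite rev_win_reidx.
  exact: lcont_reidx.
have sphi' : smooth_near
      (fun w : 'M[R]_(0, m) * (St * (In * 'M[R]_(Q, m))) => phi' w.2.1 w.2.2.1 w.2.2.2)
      (cwin 0 u0, (x0, (v0, cwin Q v0))).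
  pose P := fun w : 'M[R]_(0, m) * (St * (In * 'M[R]_(Q, m))) => (w.2.1, w.2.2.1).
  have lP : lcont P.
    apply: lcont_pair.
      exact: lcont_comp lcont_snd lcont_fst.
    exact: lcont_comp (lcont_comp lcont_snd lcont_snd) lcont_fst.
  pose psi := fun q : St * In => (PX q.1 q.2, PU q.1 q.2).
  have spsi : smooth_near psi (x0, v0) by exists B; split => //; split.
  pose Psi := fun w : 'M[R]_(0, m) * (St * (In * 'M[R]_(Q, m))) =>
     (rev_win w.2.2.2, (PX w.2.1 w.2.2.1, (PU w.2.1 w.2.2.1, (0 : 'M[R]_(0, m))))).
  have sPsi : smooth_near Psi (cwin 0 u0, (x0, (v0, cwin Q v0))).
    apply: SN_pair.
      apply: SN_lin; exact: lcont_comp (lcont_comp (lcont_comp lcont_snd lcont_snd) lcont_snd) lrev.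
    apply: SN_pair.
      have -> : (fun w : 'M[R]_(0, m) * (St * (In * 'M[R]_(Q, m))) => PX w.2.1 w.2.2.1)
         = ((@fst _ _) \o psi) \o P by [].
      by apply: SN_pre lP _; apply: SN_post lcont_fst _.
    apply: SN_pair; last exact: SN_cst.
    have -> : (fun w : 'M[R]_(0, m) * (St * (In * 'M[R]_(Q, m))) => PU w.2.1 w.2.2.1)
       = ((@snd _ _) \o psi) \o P by [].
    by apply: SN_pre lP _; apply: SN_post lcont_snd _.
  have [S0 [S0p [oS0 sS0]]] := sphi.
  have := SN_comp (FD_prod (FD_mx Q m) (FD_prod (FD_mx 1 n) (FD_prod (FD_mx 1 m) (FD_mx 0 m))))
     oS0 _ sS0 sPsi.
  move=> /(_ _) H.
  apply: (SN_loc (O := P @^-1` B)) (H _).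
  - by apply: open_comp => // w _; exact: lP.1.
  - done.
  - by move=> w Bw /=; rewrite hphi'.
  - by rewrite /Psi /= PXe PUe rev_win_cwin (mx0_eq 0 (cwin 0 u0)).
exists Fx', Fu'.
split; first exact: sphi'.
split; first exact: sFx'.
split; first exact: sFu'.
pose U' := fun q : St * In => B q /\ U (PX q.1 q.2, PU q.1 q.2).
have nU' : nbhs (x0, v0) U'.
  apply: filterI; first exact: open_nbhs_of oB Bx0.
  have c := sB 0%N _ Bx0.
  have nU2 : nbhs (PX (x0, v0).1 (x0, v0).2, PU (x0, v0).1 (x0, v0).2) U.
    by rewrite /= PXe PUe.
  exact: c _ nU2.
pose Th := fun W : 'M[R]_((R1 + 0).+1, m) => (Fx (reidx (widen_ord (leqnSn (R1 + 0))) W), Fu W).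
have cTh : {for cwin (R1 + 0).+1 y0, continuous Th}.
  apply: (cvg_pair (FF := nbhs_filter _) (FG := nbhs_filter _) (FH := nbhs_filter _)).
    have [S1 [S1p [oS1 sS1]]] := sFx.
    apply: (@continuous_comp _ _ _ (reidx (widen_ord (leqnSn (R1 + 0)))) Fx).
      exact: (lcont_reidx _).1.
    by rewrite reidx_cwin; exact: sS1 0%N _ S1p.
  have [S1 [S1p [oS1 sS1]]] := sFu.
  exact: sS1 0%N _ S1p.
have nA : nbhs (cwin (R1 + 0).+1 y0) (Th @^-1` A).
  apply: cTh; rewrite /Th reidx_cwin -EX -EU; exact: open_nbhs_of oA Ax.
move: nA => /nbhs_ballP [eps /= eps0 heps].
pose Y' := fun y => Y y /\ ball y0 (eps / 2) y.
have nY' : nbhs y0 Y'.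
  apply: (@filterI _ _ (nbhs_filter y0) _ _ nY); apply: nbhsx_ballx; by rewrite divr_gt0.
exists U', Y'; split; first exact: nU'.
split; first exact: nY'.
split.
  move=> z v trz hU k.
  pose x := fun j : int => z (- j).
  pose u := fun j : int => PU (z (- j - 1)) (v (- j - 1)).
  have hB : forall j, B (z j, v j) by move=> j; case: (hU j).
  have trF : traj F x u.
    move=> j; rewrite /x /u.
    have e1' : - (j + 1) = - j - 1 by lia.
    rewrite e1'; set a := - j - 1.
    have e2 : - j = a + 1 by rewrite /a; lia.
    rewrite e2 trz /=.
    by have [_ [-> _]] := HB _ (hB a).
  have hUx : forall j, U (x j, u j).
    move=> j; rewrite /x /u; set a := - j - 1.
    have e2 : - j = a + 1 by rewrite /a; lia.
    by rewrite e2 trz; case: (hU a).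
  have HC := C1 x u trF hUx.
  have Ezeta : (fun k1 : int => G (x k1) (u k1)) = (fun k1 => v (- k1 - 1)).
    apply/funext => j; rewrite /x /u; set a := - j - 1.
    have e2 : - j = a + 1 by rewrite /a; lia.
    rewrite e2 trz.
    by have [_ [_ ->]] := HB _ (hB a).
  rewrite Ezeta in HC.
  pose y := fun j => phi (win (fun k1 => v (- k1 - 1)) (j - Q%:Z) Q) (x j) (u j).
  have Ehat : (fun k0 : int => phi' (z k0) (v k0) (win v (k0 + 1) Q))
      = (fun k0 => y (- k0 - 1)).
    apply/funext => k0; rewrite hphi' //.
    rewrite /y /x /u.
    have e3 : - (- k0 - 1) = k0 + 1 by lia.
    have e4 : - (- k0 - 1) - 1 = k0 by lia.
    rewrite e4 e3 -trz; congr (phi _ _ _).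
    apply/matrixP => -[a ha] j; rewrite !mxE /=; congr (v _ 0 j); lia.
  rewrite Ehat.
  split.
    have [Hx _] := HC (- k).
    rewrite /Fx'.
    have -> : reidx rx (win (fun k0 => y (- k0 - 1)) (k - 0%Z) (0 + R1)) = win y (- k - R1%:Z) (R1 + 0).
      apply/matrixP => -[a ha] j; rewrite !mxE rxE /=; congr (y _ 0 j); lia.
    by rewrite -Hx /x opprK.
  have [Hx1 Hu1] := HC (- k - 1).
  rewrite /Fu'.
  have -> : reidx r1 (win (fun k0 => y (- k0 - 1)) (k - 0%Z) (0 + R1).+1) = win y (- k - 1 - R1%:Z) (R1 + 0).
    apply/matrixP => -[a ha] j; rewrite !mxE r1E /=; congr (y _ 0 j); lia.
  have -> : reidx r2 (win (fun k0 => y (- k0 - 1)) (k - 0%Z) (0 + R1).+1) = win y (- k - 1 - R1%:Z) (R1 + 0).+1.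
    apply/matrixP => -[a ha] j; rewrite !mxE r2E /=; congr (y _ 0 j); lia.
  rewrite -Hx1 -Hu1 /x /u.
  have e3 : - (- k - 1) = k + 1 by lia.
  have e4 : - (- k - 1) - 1 = k by lia.
  rewrite e4 e3 trz.
  by have [_ [_ ->]] := HB _ (hB k).
move=> haty hY'.
pose y := fun j : int => haty (- j - 1).
have hY : forall j, Y (y j) by move=> j; case: (hY' (- j - 1)).
have [trF hy] := C2 y hY.
pose x := fun j : int => Fx (win y (j - R1%:Z) (R1 + 0)).
pose u := fun j : int => Fu (win y (j - R1%:Z) (R1 + 0).+1).
have trx : forall j, x (j + 1) = F (x j) (u j) := trF.
have hy' : forall j, y j = phi (win (fun k0 => G (x k0) (u k0)) (j - Q%:Z) Q) (x j) (u j) := hy.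
have inA : forall j, A (x j, u j).
  move=> j.
  have hb : ball (cwin (R1 + 0).+1 y0) eps (win y (j - R1%:Z) (R1 + 0).+1).
    apply: win_ball => // k; by case: (hY' (- k - 1)).
  have := heps _ hb; rewrite /Th /= /x /u.
  suff -> : reidx (widen_ord (leqnSn (R1 + 0))) (win y (j - R1%:Z) (R1 + 0).+1) = win y (j - R1%:Z) (R1 + 0) by [].
  by apply/matrixP => -[a ha] l; rewrite !mxE.
have zE : forall k, Fx' (win haty (k - 0%Z) (0 + R1)) = x (- k).
  move=> k; rewrite /Fx' /x; congr Fx; apply/matrixP => -[a ha] l.
  rewrite !mxE rxE /= /y; congr (haty _ 0 l); lia.
have vE : forall k, Fu' (win haty (k - 0%Z) (0 + R1).+1) = G (x (- k - 1)) (u (- k - 1)).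
  move=> k; rewrite /Fu' /x /u; congr G.
    congr Fx; apply/matrixP => -[a ha] l.
    rewrite !mxE r1E /= /y; congr (haty _ 0 l); lia.
  congr Fu; apply/matrixP => -[a ha] l.
  rewrite !mxE r2E /= /y; congr (haty _ 0 l); lia.
have zF : forall k, x (- k) = F (x (- k - 1)) (u (- k - 1)).
  move=> k; rewrite -trx; congr x; lia.
split.
  move=> k; rewrite !zE vE (zF k).
  have [_ [-> _]] := HA _ (inA (- k - 1)).
  by rewrite /=; congr x; lia.
move=> k.
have Ev : (fun k0 : int => Fu' (win haty (k0 - 0%Z) (0 + R1).+1))
     = (fun k0 => G (x (- k0 - 1)) (u (- k0 - 1))).
  by apply/funext => k0; rewrite vE.
rewrite Ev zE vE (zF k).
rewrite hphi'; last exact: (HA _ (inA (- k - 1))).1.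
have [_ [e5 e6]] := HA _ (inA (- k - 1)); rewrite /= in e5 e6; rewrite e5 e6.
have -> : haty k = y (- k - 1) by rewrite /y; congr haty; lia.
rewrite hy'; congr phi; apply/matrixP => -[a ha] l; rewrite !mxE /=.
congr (G (x _) (u _) 0 l); lia.
Qed.


End PartG2.
Unset Implicit Arguments.

Theorem corollary1 (R : realType) (n m : nat)
    (f : 'rV[R]_n -> 'rV[R]_m -> 'rV[R]_n) (g : 'rV[R]_n -> 'rV[R]_m -> 'rV[R]_m)
    (psix : 'rV[R]_n -> 'rV[R]_m -> 'rV[R]_n) (psiu : 'rV[R]_n -> 'rV[R]_m -> 'rV[R]_m)
    (x0 : 'rV[R]_n) (u0 : 'rV[R]_m) :
  smooth (uncurry_sys f) ->
  smooth (uncurry_sys g) ->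
  (forall p, \rank (jac_u f p) = m) ->
  (forall p, \rank (row_mx (jac_x f p) (jac_u f p)) = n) ->
  f x0 u0 = x0 ->
  local_inverse f g psix psiu x0 u0 ->
  (* (i) flat outputs of the form y = phi(x, u, u_[1,Q2]) *)
  (forall (Q2 : nat) (phi : 'rV[R]_n -> 'rV[R]_m -> 'M[R]_(Q2, m) -> 'rV[R]_m),
     is_flat_output f g x0 u0 0 Q2 (fun _ => phi) ->
     (backward_flat_output psix psiu x0 (g x0 u0) Q2
        (fun (eta : 'M[R]_(Q2, m)) z v => phi (psix z v) (psiu z v) (rev_win eta))
      <-> forward_flat_output f g x0 u0 Q2 phi)) /\
  (* (ii) flat outputs of the form y = phi(zeta_[-Q1,-1], x, u) *)
  (forall (Q1 : nat) (phi : 'M[R]_(Q1, m) -> 'rV[R]_n -> 'rV[R]_m -> 'rV[R]_m),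
     is_flat_output f g x0 u0 Q1 0 (fun a x u _ => phi a x u) ->
     (forward_flat_output psix psiu x0 (g x0 u0) Q1
        (fun z v (vw : 'M[R]_(Q1, m)) => phi (rev_win vw) (psix z v) (psiu z v))
      <-> backward_flat_output f g x0 u0 Q1 phi)).
Proof.
move=> _ _ _ _ Feq [A [B hLI0]].
have hLI : LI f g psix psiu x0 u0 A B := hLI0.
have hLI' := LI_sym hLI Feq.
have [Ax [_ [_ [_ [HA _]]]]] := hLI.
have [_ [PXe PUe]] := HA _ Ax; rewrite /= Feq in PXe PUe.
split.
- move=> Q2 phi _; split.
  + move=> [R1 H].
    have := L2 hLI' PXe H (phi' := phi).
    rewrite PUe => H2; exists R1; apply: H2.
    move=> z v w Azv.
    have [_ [e1 e2]] := HA _ Azv; rewrite /= in e1 e2.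
    by rewrite e1 e2 rev_winK.
  + move=> [R2 H]; exists R2.
    exact: (L1 hLI Feq H (phi' := fun eta z v => phi (psix z v) (psiu z v) (rev_win eta))).
- move=> Q1 phi _; split.
  + move=> [R2 H].
    have := L1 hLI' PXe H (phi' := phi).
    rewrite PUe => H2; exists R2; apply: H2.
    move=> eta z v Azv.
    have [_ [e1 e2]] := HA _ Azv; rewrite /= in e1 e2.
    by rewrite e1 e2 rev_winK.
  + move=> [R1 H]; exists R1.
    exact: (L2 hLI Feq H (phi' := fun z v vw => phi (rev_win vw) (psix z v) (psiu z v))).
Qed.
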